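(* Let $X$ and $Y$ be Banach spaces and $u:X\to Y$ a continuous linear operator. If the adjoint $u^*:Y^*\to X^*$ is almost summing, then for every $q\geq 2$ and every $(x_i)_{i=1}^\infty\in Rad(X)$ we have $(u(x_i))_{i=1}^\infty\in\ell_q\langle Y\rangle$.
   Context: $r_i$ denote the Rademacher functions. $Rad(X)$ is the space of sequences $(x_i)\subset X$ with $\left(\int_0^1\left\|\sum_{i=1}^\infty r_i(t)x_i\right\|^2dt\right)^{1/2}<\infty$. For $1\le s\le\infty$, $\ell_s^w(X)$ is the space of sequences with $\|(x_i)\|_{w,s}:=\sup_{x^*\in B_{X^*}}\|(x^*(x_i))_i\|_s<\infty$. For $1\le q\le \infty$ with conjugate $q^*$, $\ell_q\langle Y\rangle$ is the space of sequences $(y_i)\subset Y$ such that $\sup\{\sum_i|y_i^*(y_i)|:(y_i^* )\in B_{\ell_{q^*}^w(Y^* )}\}<\infty$. An operator $v\in\mathcal L(E,F)$ is almost summing if there is $C\ge0$ with $\left(\int_0^1\left\|\sum_{i=1}^m r_i(t)v(x_i)\right\|^2dt\right)^{1/2}\le C\|(x_i)_{i=1}^m\|_{w,2}$ for all $m$ and $x_1,\dots,x_m\in E$. *)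

(* Defs.v *)
From HB Require Import structures.
From mathcomp Require Import all_boot all_order all_algebra.
From mathcomp Require Import all_classical all_reals all_analysis.
Set Implicit Arguments. Unset Strict Implicit. Unset Printing Implicit Defensive.
Import Order.TTheory GRing.Theory Num.Theory.
Import numFieldNormedType.Exports.
Local Open Scope classical_set_scope.
Local Open Scope ring_scope.

Definition rademacher {R : realType} (n : nat) (t : R) : R :=
  Num.sg (sin (2 ^+ n * pi * t)).

Definition is_linfun {R : realType} {E : normedModType R} (f : E -> R) :=
  forall (a : R) (x y : E), f (a *: x + y) = a * f x + f y.
Definition dual_elem {R : realType} {E : normedModType R} (f : E -> R) :=
  is_linfun f /\ continuous f.

Definition dual_norm {R : realType} {E : normedModType R} (f : E -> R) : \bar R :=
  ereal_sup [set (`|f x|)%:E | x in [set x : E | `|x| <= 1]].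

Definition bidual_ball {R : realType} {E : normedModType R}
    (phi : (E -> R) -> R) : Prop :=
  (forall (a : R) (f g : E -> R), dual_elem f -> dual_elem g ->
     phi (fun x => a * f x + g x) = a * phi f + phi g) /\
  (forall f : E -> R, dual_elem f -> ((`|phi f|)%:E <= dual_norm f)%E ).

Definition wnorm2_dual_fin {R : realType} {E : normedModType R}
    (m : nat) (fs : nat -> E -> R) : \bar R :=
  ereal_sup [set ((\sum_(i < m) (`|phi (fs i)| ^+ 2)%:E) `^ (2^-1))%E
            | phi in bidual_ball ].

Definition wnorm_dual {R : realType} {E : normedModType R}
    (s : R) (fs : nat -> E -> R) : \bar R :=
  ereal_sup [set ((\sum_(i <oo) ((`|phi (fs i)| `^ s)%:E)) `^ (s^-1))%E
            | phi in bidual_ball ].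

(* The adjoint adjoint of u, Y-dual -> X-dual, g |-> g \o u, is almost summing *)
Definition adjoint_almost_summing {R : realType}
    {X Y : normedModType R} (u : X -> Y) : Prop :=
  exists C : R, 0 <= C /\
    forall (m : nat) (ys : nat -> Y -> R),
      (forall i, (i < m)%N -> dual_elem (ys i)) ->
      ((\int[(@lebesgue_measure R)]_(t in `[0%R, 1%R])
          (dual_norm (fun x : X =>
              (\sum_(i < m) rademacher i.+1 t * ys i (u x))%R) ^+ 2))
         `^ (2^-1) <= C%:E * wnorm2_dual_fin m ys)%E.

Definition in_Rad {R : realType} {X : normedModType R} (xs : nat -> X) : Prop :=
  exists M : R, forall m : nat,
    (\int[(@lebesgue_measure R)]_(t in `[0%R, 1%R])
        ((`| \sum_(i < m) rademacher i.+1 t *: xs i | ^+ 2)%:E)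
      <= M%:E)%E.

Definition conj_exp {R : realType} (q : R) : R := q / (q - 1).

Definition in_ell_angle {R : realType} {Y : normedModType R}
    (q : R) (ys : nat -> Y) : Prop :=
  (ereal_sup [set \sum_(i <oo) ((`|g i (ys i)|)%:E)
             | g in [set g : nat -> Y -> R | (forall i, dual_elem (g i)) /\
                                   (wnorm_dual (conj_exp q) g <= 1)%E]]
   < +oo)%E.

(* Main.v *)
Require Import Defs.
From HB Require Import structures.
From mathcomp Require Import all_boot all_order all_algebra.
From mathcomp Require Import all_classical all_reals all_analysis.
From mathcomp Require Import lra.
Import Order.TTheory GRing.Theory Num.Theory.
Import numFieldNormedType.Exports.
Local Open Scope ring_scope.
Section A.
Variable R : realType.

Lemma sinDnpi (y : R) (q : nat) : sin (y + q%:R * pi) = (-1) ^+ q * sin y.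
Proof.
elim: q => [|q IH]; first by rewrite mul0r addr0 expr0 mul1r.
by rewrite -natr1 mulrDl mul1r addrA sinDpi IH exprS mulN1r mulNr.
Qed.

Lemma sin_sign (x : R) (q : nat) : q%:R < x < q.+1%:R ->
  Num.sg (sin (x * pi)) = (-1) ^+ q.
Proof.
move=> /andP[h1 h2].
have -> : x * pi = (x - q%:R) * pi + q%:R * pi by rewrite mulrBl subrK.
rewrite sinDnpi sgrM sgrX sgrN1 gtr0_sg ?mulr1 //.
apply: sin_gt0_pi; apply/andP; split.
  by rewrite mulr_gt0 ?pi_gt0 // subr_gt0.
rewrite -[ltRHS]mul1r ltr_pM2r ?pi_gt0 // ltrBlDr addrC natr1 //.
Qed.

Lemma rad_itv (m k : nat) (i : 'I_m) (t : R) :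
  k%:R / 2 ^+ m < t < k.+1%:R / 2 ^+ m ->
  rademacher i.+1 t = (-1) ^+ (k %/ 2 ^ (m - i.+1)).
Proof.
move=> /andP[h1 h2].
have m2 : (0 : R) < 2 ^+ m by rewrite exprn_gt0.
rewrite ltr_pdivrMr // in h1; rewrite ltr_pdivlMr // in h2.
set p := (m - i.+1)%N; set q := (k %/ 2 ^ p)%N.
have emp : m = (i.+1 + p)%N by rewrite subnKC.
have P0 : (0 : R) < 2 ^+ p by rewrite exprn_gt0.
rewrite /rademacher (_ : 2 ^+ i.+1 * pi * t = (2 ^+ i.+1 * t) * pi); last first.
  by rewrite mulrAC.
apply: sin_sign; apply/andP; split.
- rewrite -(ltr_pM2r P0) -mulrA (mulrC t) mulrA -exprD -emp.
  rewrite (mulrC (2 ^+ m)); apply: (le_lt_trans _ h1); rewrite -natrX -natrM ler_nat.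
  exact: leq_trunc_div.
- rewrite -(ltr_pM2r P0) -mulrA (mulrC t) mulrA -exprD -emp.
  rewrite (mulrC (2 ^+ m)); apply: (lt_le_trans h2); rewrite -natrX -natrM ler_nat.
  by apply: ltn_ceil; rewrite expn_gt0.
Qed.

Local Open Scope ereal_scope.

Lemma ge0_le_integral_any d (T : measurableType d)
  (mu : {measure set T -> \bar R}) (D : set T) (f g : T -> \bar R) :
  (forall x, D x -> 0 <= f x) -> (forall x, D x -> f x <= g x) ->
  \int[mu]_(x in D) f x <= \int[mu]_(x in D) g x.
Proof.
move=> f0 fg.
have g0 : forall x, D x -> 0 <= g x by move=> x Dx; exact: le_trans (f0 _ Dx) (fg _ Dx).
rewrite !ge0_integralE //; apply: ereal_sup_le => _ [h hf <-]; exists h => //= x.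
apply: le_trans (hf x) _; rewrite /patch; case: ifP => // /set_mem; exact: fg.
Qed.

Local Close Scope ereal_scope.

Definition dI (m k : nat) : set R := [set` `]k%:R / 2 ^+ m, k.+1%:R / 2 ^+ m[%R ].

Lemma dI_inj (m j k : nat) (t : R) : dI m j t -> dI m k t -> j = k.
Proof.
rewrite /dI /= !in_itv /= => /andP[a1 a2] /andP[b1 b2].
have m2 : (0 : R) < 2 ^+ m by rewrite exprn_gt0.
have mi : (0 : R) < (2 ^+ m)^-1 by rewrite invr_gt0.
have h1 : (j%:R : R) < k.+1%:R.
  by rewrite -(ltr_pM2r mi); exact: lt_trans a1 b2.
have h2 : (k%:R : R) < j.+1%:R.
  by rewrite -(ltr_pM2r mi); exact: lt_trans b1 a2.
rewrite ltr_nat in h1; rewrite ltr_nat in h2.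
by apply/eqP; rewrite eqn_leq -ltnS h1 -ltnS h2.
Qed.

Lemma dI_sub (m k : nat) : (k < 2 ^ m)%N -> (dI m k `<=` [set` `[0%R, 1%R]%R])%classic.
Proof.
move=> km t; rewrite /dI /= !in_itv /= => /andP[a1 a2].
have m2 : (0 : R) < 2 ^+ m by rewrite exprn_gt0.
apply/andP; split.
  by apply: ltW; apply: le_lt_trans a1; rewrite divr_ge0.
apply: (ltW (lt_le_trans a2 _)); rewrite ler_pdivrMr // mul1r -natrX ler_nat.
exact: km.
Qed.

Lemma dI_measure (m k : nat) :
  (@lebesgue_measure R) (dI m k) = ((2 ^+ m)^-1)%:E.
Proof.
rewrite /dI lebesgue_measure_itv /=.
have m2 : (0 : R) < 2 ^+ m by rewrite exprn_gt0.
rewrite lte_fin ltr_pM2r ?invr_gt0 // ltr_nat ltnSn -EFinD; congr (_%:E).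
by rewrite -mulrBl -natrB // subSnn mul1r.
Qed.


Definition sgv (m k : nat) : 'I_m -> R := fun i => (-1) ^+ (k %/ 2 ^ (m - i.+1)).

Local Open Scope ereal_scope.

Lemma lower_bound (m : nat) (Phi : ('I_m -> R) -> \bar R) :
  (forall v, 0 <= Phi v) ->
  \sum_(k < 2 ^ m) ((2 ^+ m)^-1)%:E * Phi (sgv m k) <=
  \int[(@lebesgue_measure R)]_(t in `[0%R, 1%R]) Phi (fun i => rademacher i.+1 t).
Proof.
move=> Phi0.
pose h (t : R) := \sum_(k < 2 ^ m) Phi (sgv m k) * (\1_(dI m k) t)%:E.
have mD : measurable ([set` `[0%R, 1%R]%R] : set R) by exact: measurable_itv.
apply: (@le_trans _ _ (\int[(@lebesgue_measure R)]_(t in `[0%R, 1%R]) h t)).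
  rewrite /h ge0_integral_sum //; last first.
  - move=> k t _; apply: mule_ge0 => //; rewrite lee_fin indicE; exact: ler0n.
  - move=> k; apply: measurable_funeM; apply/measurable_realfun.measurable_EFinP.
    apply: measurable_realfun.measurable_indic; rewrite /dI; exact: measurable_itv.
  rewrite le_eqVlt; apply/orP; left; apply/eqP.
  apply: eq_bigr => k _.
  rewrite ge0_integralZl //; last first.
  - by apply/measurable_realfun.measurable_EFinP; apply: measurable_realfun.measurable_indic; rewrite /dI; exact: measurable_itv.
  rewrite integral_indic //; last by rewrite /dI; exact: measurable_itv.
  rewrite setIidl; first by rewrite muleC; congr (_ * _); symmetry; exact: dI_measure.
  exact: dI_sub (ltn_ord k).
apply: ge0_le_integral_any.
  move=> t _; rewrite /h; apply: sume_ge0 => k _.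
  by apply: mule_ge0 => //; rewrite lee_fin indicE ler0n.
move=> t _; rewrite /h.
have [[k kt]|nk] := pselect (exists k : 'I_(2 ^ m), dI m k t).
  rewrite (bigD1 k) //= big1 ?adde0; last first.
    move=> j jk; rewrite indicE memNset ?mule0 //.
    by move=> jt; move/negP: jk; apply; apply/eqP; apply/val_inj; exact: dI_inj jt kt.
  rewrite indicE mem_set // mule1; rewrite le_eqVlt; apply/orP; left; apply/eqP.
  congr Phi; apply: funext => i; rewrite /sgv; symmetry; apply: rad_itv.
  by move: kt; rewrite /dI /= in_itv.
rewrite big1 // => k _; rewrite indicE memNset ?mule0 //.
by move=> kt; apply: nk; exists k.
Qed.

Local Close Scope ereal_scope.

Lemma big_shift (F : nat -> R) (n B : nat) :
  \sum_(n <= k < n + B) F k = \sum_(0 <= r < B) F (r + n)%N.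
Proof. by rewrite -{1}[n]add0n big_addn addKn. Qed.

Lemma sum_mul_split (F : nat -> R) (A B : nat) :
  \sum_(0 <= k < A * B) F k = \sum_(0 <= q < A) \sum_(0 <= r < B) F (q * B + r)%N.
Proof.
elim: A => [|A IH]; first by rewrite mul0n !big_geq.
rewrite mulSnr big_nat_recr //= (@big_cat_nat _ _ _ (A * B)) ?leq_addr //.
rewrite IH (big_shift _ (A * B) B); congr (_ + _); apply: eq_bigr => r _; by rewrite addnC.
Qed.

Lemma sum_sign_half (a : nat) :
  \sum_(0 <= r < 2 ^ a.+1) ((-1) ^+ (r %/ 2 ^ a) : R) = 0.
Proof.
rewrite expnS mul2n -addnn (@big_cat_nat _ _ _ (2 ^ a)) ?leq_addr //.
rewrite (big_shift _ (2 ^ a) (2 ^ a)).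
have -> : \sum_(0 <= r < 2 ^ a) ((-1) ^+ (r %/ 2 ^ a) : R) = \sum_(0 <= r < 2 ^ a) 1.
  by apply: eq_big_nat => r /andP[_ ra]; rewrite divn_small.
have -> : \sum_(0 <= r < 2 ^ a) ((-1) ^+ ((r + 2 ^ a) %/ 2 ^ a) : R) =
    \sum_(0 <= r < 2 ^ a) (-1).
  apply: eq_big_nat => r /andP[_ ra].
  rewrite addnC -[X in (X + r)%N]mul1n divnMDl ?expn_gt0 // divn_small //.
by rewrite /= !sumr_const_nat subn0 -mulrnDl addrN mul0rn.
Qed.

Lemma ortho_ab (m a b : nat) : (a < b)%N -> (b < m)%N ->
  \sum_(k < 2 ^ m) (((-1) ^+ (k %/ 2 ^ a) : R) * (-1) ^+ (k %/ 2 ^ b)) = 0.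
Proof.
move=> ab bm.
have e : (2 ^ m = 2 ^ (m - a.+1) * 2 ^ a.+1)%N.
  by rewrite -expnD subnK // (ltn_trans ab bm).
rewrite -(big_mkord xpredT (fun k => ((-1) ^+ (k %/ 2 ^ a) : R) * (-1) ^+ (k %/ 2 ^ b))).
rewrite e sum_mul_split big1 // => q _.
have Hb : forall r, (r < 2 ^ a.+1)%N ->
    ((q * 2 ^ a.+1 + r) %/ 2 ^ b = q %/ 2 ^ (b - a.+1))%N.
  move=> r ra.
  have -> : (2 ^ b = 2 ^ a.+1 * 2 ^ (b - a.+1))%N by rewrite -expnD subnKC.
  by rewrite divnMA divnMDl ?expn_gt0 // (divn_small ra) addn0.
have Ha : forall r, (r < 2 ^ a.+1)%N ->
    ((-1) ^+ ((q * 2 ^ a.+1 + r) %/ 2 ^ a) : R) = (-1) ^+ (r %/ 2 ^ a).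
  move=> r ra.
  rewrite expnS mulnA divnMDl ?expn_gt0 // exprD exprM sqrr_sign mul1r.
  by [].
rewrite (@eq_big_nat _ _ _ _ _ _ (fun r => (-1) ^+ (r %/ 2 ^ a) * (-1) ^+ (q %/ 2 ^ (b - a.+1)))); last first.
  by move=> r /andP[_ ra]; rewrite Ha // Hb.
by rewrite -mulr_suml sum_sign_half mul0r.
Qed.
End A.

Section D.
Variable R : realType.
Variable E : normedModType R.

Lemma lin0 (f : E -> R) : is_linfun f -> f 0 = 0.
Proof.
move=> hf; have h := hf 1 0 0; rewrite scale1r addr0 mul1r in h.
by apply: (addrI (f 0)); rewrite addr0 -h.
Qed.

Lemma linZ (f : E -> R) c x : is_linfun f -> f (c *: x) = c * f x.
Proof. by move=> hf; have := hf c x 0; rewrite addr0 lin0 // addr0. Qed.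

Lemma linD (f : E -> R) x y : is_linfun f -> f (x + y) = f x + f y.
Proof. by move=> hf; have := hf 1 x y; rewrite scale1r mul1r. Qed.

Lemma lin_sum (f : E -> R) m (c : 'I_m -> R) (x : 'I_m -> E) : is_linfun f ->
  f (\sum_(i < m) c i *: x i) = \sum_(i < m) c i * f (x i).
Proof.
move=> hf; apply: (big_ind2 (fun a b => f a = b)).
- exact: lin0.
- by move=> x1 x2 y1 y2 <- <-; rewrite linD.
- by move=> i _; rewrite linZ.
Qed.

Local Open Scope ereal_scope.

Lemma dual_bound (f : E -> R) x : is_linfun f ->
  (`|f x|)%:E <= dual_norm f * (`|x|)%:E.
Proof.
move=> hf; have [->|x0] := eqVneq x 0%R.
  by rewrite lin0 // !normr0 mule0.
have nx : (0 < `|x|)%R by rewrite normr_gt0.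
have H : (`|f (`|x|^-1 *: x)|)%:E <= dual_norm f.
  apply: ereal_sup_ubound; exists (`|x|^-1 *: x) => //=.
  by rewrite normrZ ger0_norm ?invr_ge0 ?(ltW nx) // mulVf // gt_eqF.
apply: le_trans (lee_wpmul2r _ H); last by rewrite lee_fin.
rewrite -EFinM linZ // normrM ger0_norm ?invr_ge0 ?(ltW nx) //.
by rewrite mulrC mulrA mulfV ?gt_eqF // mul1r.
Qed.

Lemma ab_le (N : \bar R) (b : R) : 0 <= N -> (0 <= b)%R ->
  N * b%:E <= N ^+ 2 + (b ^+ 2)%:E.
Proof.
case: N => [r| |] // r0 b0.
  rewrite -EFin_expe -EFinM -EFinD lee_fin.
  rewrite lee_fin in r0.
  by nra.
by rewrite expe2 mulyy addye // leey.
Qed.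
End D.

Section E.
Variable R : realType.

Lemma ortho (m : nat) (i j : 'I_m) :
  \sum_(k < 2 ^ m) (sgv R m k i * sgv R m k j) = if i == j then (2 ^ m)%:R else 0.
Proof.
rewrite /sgv; case: eqVneq => [->|ij].
  under eq_bigr do rewrite -expr2 sqrr_sign.
  by rewrite sumr_const card_ord.
have im : (m - i.+1 < m)%N by rewrite ltn_subrL (leq_ltn_trans _ (ltn_ord i)).
have jm : (m - j.+1 < m)%N by rewrite ltn_subrL (leq_ltn_trans _ (ltn_ord j)).
have ne : (m - i.+1 != m - j.+1)%N.
  apply: contra ij => /eqP h; apply/eqP/val_inj => /=.
  by have := congr1 (subn m) h; rewrite !subKn //; case.
case: (ltngtP (m - i.+1) (m - j.+1)) => [h|h|h]; last by rewrite h eqxx in ne.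
  exact: ortho_ab h jm.
under eq_bigr do rewrite mulrC.
exact: ortho_ab h im.
Qed.

Lemma powR_le1_inv (x r : R) : 0 <= x -> 0 < r -> x `^ r <= 1 -> x <= 1.
Proof.
move=> x0 r0 h.
have := @ge0_ler_powR _ r^-1 _ (x `^ r) 1 _ _ h.
rewrite -powRrM mulfV ?gt_eqF // powRr1 // powR1; apply.
- by rewrite invr_ge0 ltW.
- by rewrite nnegrE powR_ge0.
- by rewrite nnegrE.
Qed.

Lemma powR_le1 (x r : R) : 0 <= x <= 1 -> 0 <= r -> x `^ r <= 1.
Proof.
move=> /andP[x0 x1] r0.
have := @ge0_ler_powR _ r r0 x 1 _ _ x1.
rewrite powR1; apply; by rewrite nnegrE.
Qed.

Lemma sq_le_pow (y s : R) : 0 <= y <= 1 -> 0 < s <= 2 -> y ^+ 2 <= y `^ s.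
Proof.
move=> /andP[y0 y1] /andP[s0 s2].
have [->|yn0] := eqVneq y 0.
  by rewrite expr0n /= powR_ge0.
have yp : 0 < y by rewrite lt_def yn0 y0.
rewrite -powR_mulrn //.
by apply: (ger_powR _ s2); rewrite yp y1.
Qed.

Local Open Scope ereal_scope.
Lemma poweR_le1_inv (T : \bar R) (r : R) : 0 <= T -> (0 < r)%R -> T `^ r <= 1 -> T <= 1.
Proof.
case: T => [t| |] // t0 r0.
  by rewrite poweR_EFin !lee_fin; apply: powR_le1_inv.
by rewrite poweRyr ?gt_eqF.
Qed.

End E.

Section F.
Variable R : realType.
Variable E : normedModType R.

Lemma dual_zero : dual_elem (fun _ : E => 0 : R).
Proof.
split; first by move=> a x y; rewrite mulr0 addr0.
by move=> x; exact: cst_continuous.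
Qed.

Lemma dual_scale (f : E -> R) c : dual_elem f -> dual_elem (fun y => c * f y).
Proof.
move=> [hl hc]; split; first by move=> a x y; rewrite hl mulrDr mulrCA.
move=> x; apply: (@continuousM _ _ (fun=> c) f x); [exact: cst_continuous | exact: hc].
Qed.

Lemma phiZ (phi : (E -> R) -> R) (f : E -> R) c :
  bidual_ball phi -> dual_elem f -> phi (fun y => c * f y) = c * phi f.
Proof.
move=> [hl _] df.
have p0 : phi (fun _ => 0) = 0.
  have := hl 1 _ _ dual_zero dual_zero.
  rewrite (_ : (fun _ : E => 1 * 0 + 0) = fun _ => 0); last first.
    by apply: funext => y; rewrite mulr0 addr0.
  rewrite mul1r => h; apply: (addrI (phi (fun _ => 0))).
  by rewrite addr0 -h.
have := hl c _ _ df dual_zero.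
rewrite p0 addr0 (_ : (fun x : E => c * f x + 0) = fun y => c * f y) //.
by apply: funext => y; rewrite addr0.
Qed.
End F.

Lemma dual_norm_ge0 (R : realType) (E : normedModType R) (f : E -> R) :
  (0 <= dual_norm f)%E.
Proof.
apply: (@le_trans _ _ (`|f 0|)%:E); first by rewrite lee_fin.
by apply: ereal_sup_ubound; exists 0 => //=; rewrite normr0.
Qed.

Lemma Flin (R : realType) (X Y : normedModType R) (u : {linear X -> Y})
  (m : nat) (ys : nat -> Y -> R) (v : 'I_m -> R) :
  (forall i, is_linfun (ys i)) ->
  is_linfun (fun x : X => \sum_(i < m) v i * ys i (u x)).
Proof.
move=> yl a x y; rewrite linearP mulr_sumr -big_split; apply: eq_bigr => i _ /=.
by rewrite yl mulrDr mulrCA.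
Qed.

Lemma ident (R : realType) (X Y : normedModType R) (u : {linear X -> Y})
  (m : nat) (ys : nat -> Y -> R) (xs : nat -> X) :
  (forall i, is_linfun (ys i)) ->
  \sum_(k < 2 ^ m) (\sum_(i < m) sgv R m k i * ys i (u (\sum_(j < m) sgv R m k j *: xs j)))
  = (2 ^ m)%:R * \sum_(i < m) ys i (u (xs i)).
Proof.
move=> yl.
have e1 : forall k : 'I_(2 ^ m), \sum_(i < m) sgv R m k i * ys i (u (\sum_(j < m) sgv R m k j *: xs j))
   = \sum_(i < m) \sum_(j < m) sgv R m k i * (sgv R m k j * ys i (u (xs j))).
  move=> k; apply: eq_bigr => i _; rewrite linear_sum.
  rewrite (_ : \sum_(j < m) u (sgv R m k j *: xs j) = \sum_(j < m) sgv R m k j *: u (xs j)); last first.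
    by apply: eq_bigr => j _; rewrite linearZ.
  by rewrite lin_sum // mulr_sumr.
rewrite (eq_bigr _ (fun k _ => e1 k)) exchange_big mulr_sumr; apply: eq_bigr => i _ /=.
rewrite exchange_big /=.
rewrite (eq_bigr (fun j => (\sum_(k < 2 ^ m) sgv R m k i * sgv R m k j) * ys i (u (xs j)))); last first.
  by move=> j _; rewrite mulr_suml; apply: eq_bigr => k _; rewrite mulrA.
rewrite (bigD1 (F := fun j : 'I_m => (\sum_(k < 2 ^ m) sgv R m k i * sgv R m k j) * ys i (u (xs j))) i) //=.
rewrite [X in _ + X]big1 ?addr0; last first.
  by move=> j ji; rewrite ortho eq_sym (negbTE ji) mul0r.
by rewrite ortho eqxx.
Qed.

Lemma sqrt_bound (R : realType) (I : \bar R) (C : R) : (0 <= I)%E -> 0 <= C ->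
  (I `^ 2^-1 <= C%:E)%E -> (I <= (C ^+ 2)%:E)%E.
Proof.
case: I => [r| |] // r0 C0.
  rewrite lee_fin in r0.
  rewrite poweR_EFin lee_fin powR12_sqrt // => hr.
  rewrite lee_fin -(sqr_sqrtr r0) lerXn2r // ?nnegrE ?sqrtr_ge0 //.
by rewrite poweRyr // invr_neq0.
Qed.

Theorem corollary2p2 (R : realType) (X Y : completeNormedModType R)
    (u : {linear X -> Y}) :
  continuous u ->
  adjoint_almost_summing u ->
  forall q : R, 2 <= q ->
  forall xs : nat -> X, in_Rad xs -> in_ell_angle q (fun i => u (xs i)).
Proof.
move=> ucont [C [C0 HC]] q q2 xs [M HM].
set s := conj_exp q.
have q1 : 0 < q - 1 by lra.
have s0 : 0 < s by rewrite /s /conj_exp divr_gt0 //; lra.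
have s2 : s <= 2 by rewrite /s /conj_exp ler_pdivrMr //; lra.
rewrite /in_ell_angle.
apply: (@le_lt_trans _ _ (C ^+ 2 + M)%:E); last exact: ltey.
apply: ge_ereal_sup => _ [g [gd gw] <-].
suff Hm : forall m, (\sum_(i < m) (`|g i (u (xs i))|)%:E <= (C ^+ 2 + M)%:E)%E.
  apply: lime_le; first by apply: is_cvg_nneseries => n _ _; rewrite lee_fin.
  by apply: nearW => n; rewrite big_mkord; exact: Hm.
move=> m.
pose eps i := Num.sg (g i (u (xs i))).
pose ys : nat -> Y -> R := fun i y => eps i * g i y.
have yd : forall i, dual_elem (ys i) by move=> i; exact: dual_scale.
have yl : forall i, is_linfun (ys i) by move=> i; case: (yd i).
have w1 : (wnorm2_dual_fin m ys <= 1)%E.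
  apply: ge_ereal_sup => _ [phi phiB <-].
  have hg : ((\sum_(i <oo) ((`|phi (g i)| `^ s)%:E)) `^ s^-1 <= 1)%E.
    apply: le_trans gw; apply: ereal_sup_ubound; by exists phi.
  have hT0 : (0 <= \sum_(i <oo) ((`|phi (g i)| `^ s)%:E))%E.
    by apply: nneseries_ge0 => n _ _; rewrite lee_fin powR_ge0.
  have hT : (\sum_(i <oo) ((`|phi (g i)| `^ s)%:E) <= 1)%E.
    by apply: (@poweR_le1_inv R _ (s^-1) hT0 _ hg); rewrite invr_gt0.
  have hP : (\sum_(0 <= i < m) ((`|phi (g i)| `^ s)%:E) <= 1)%E.
    apply: le_trans hT; apply: nneseries_lim_ge => n _ _; by rewrite lee_fin powR_ge0.
  rewrite sumEFin lee_fin big_mkord in hP.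
  have each : forall i : 'I_m, `|phi (g i)| <= 1.
    move=> i; apply: (@powR_le1_inv R _ s _ s0); first exact: normr_ge0.
    apply: le_trans hP; rewrite (bigD1 i) //= lerDl.
    by apply: sumr_ge0 => j _; rewrite powR_ge0.
  have key : \sum_(i < m) `|phi (ys i)| ^+ 2 <= \sum_(i < m) `|phi (g i)| `^ s.
    apply: ler_sum => i _; rewrite /ys phiZ // normrM.
    have e1 : `|eps i| <= 1 by rewrite normr_sg lern1 leq_b1.
    have e0 : 0 <= `|eps i| := normr_ge0 _.
    have a0 : 0 <= `|phi (g i)| := normr_ge0 _.
    have a1 := each i.
    apply: (@le_trans _ _ (`|phi (g i)| ^+ 2)).
      rewrite exprMn; apply: ler_piMl; first exact: sqr_ge0.
      by rewrite exprn_ile1.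
    by apply: sq_le_pow; rewrite ?a0 ?a1 ?s0 ?s2.
  rewrite sumEFin poweR_EFin lee_fin; apply: powR_le1; last by rewrite invr_ge0.
  apply/andP; split; first by apply: sumr_ge0 => i _; exact: sqr_ge0.
  exact: le_trans key hP.
have HCm := HC m ys (fun i _ => yd i).
have int1 : (\int[(@lebesgue_measure R)]_(t in `[0%R, 1%R])
          (dual_norm (fun x : X =>
              (\sum_(i < m) rademacher i.+1 t * ys i (u x))%R) ^+ 2)
          <= (C ^+ 2)%:E)%E.
  have C0' : (0 <= C%:E)%E by rewrite lee_fin.
  have hI := le_trans HCm (@lee_wpmul2l _ C%:E C0' _ _ w1).
  rewrite mule1 in hI.
  have I0 : (0 <= \int[(@lebesgue_measure R)]_(t in `[0%R, 1%R])
          (dual_norm (fun x : X =>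
              (\sum_(i < m) rademacher i.+1 t * ys i (u x))%R) ^+ 2))%E.
    by apply: integral_ge0 => t _; exact: sqre_ge0.
  exact: sqrt_bound I0 C0 hI.
have int2 := HM m.
pose Phi1 := fun v : 'I_m -> R => (dual_norm (fun x : X => (\sum_(i < m) v i * ys i (u x))%R) ^+ 2)%E.
pose Phi2 := fun v : 'I_m -> R => ((`| \sum_(i < m) v i *: xs i | ^+ 2)%R)%:E.
have low1 := @lower_bound R m Phi1 (fun v => sqre_ge0 _).
have low2 : forall v, (0 <= Phi2 v)%E by move=> v; rewrite lee_fin sqr_ge0.
move/(@lower_bound R m Phi2): low2 => low2.
have idn := @ident R X Y u m ys xs yl.
have m2 : (2 ^+ m : R) != 0 by rewrite expf_neq0 // pnatr_eq0.
have eq1 : \sum_(i < m) `|g i (u (xs i))| = (2 ^+ m)^-1 *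
  \sum_(k < 2 ^ m) (\sum_(i < m) sgv R m k i * ys i (u (\sum_(j < m) sgv R m k j *: xs j))).
  rewrite idn natrX mulrA mulVf // mul1r; apply: eq_bigr => i _.
  by rewrite /ys /eps -normrEsg.
rewrite sumEFin eq1 mulr_sumr -sumEFin.
apply: (@le_trans _ _ (\sum_(k < 2 ^ m) (((2 ^+ m)^-1)%:E * Phi1 (sgv R m k) + ((2 ^+ m)^-1)%:E * Phi2 (sgv R m k)))%E).
  apply: lee_sum => k _.
  rewrite -ge0_muleDr ?sqre_ge0 ?lee_fin ?sqr_ge0 // EFinM.
  apply: lee_wpmul2l; first by rewrite lee_fin invr_ge0 exprn_ge0.
  apply: le_trans (_ : _ <= (`|\sum_(i < m) sgv R m k i * ys i (u (\sum_(j < m) sgv R m k j *: xs j))|)%:E)%E _.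
    by rewrite lee_fin ler_norm.
  have := @dual_bound R X _ (\sum_(j < m) sgv R m k j *: xs j) (@Flin R X Y u m ys (sgv R m k) yl).
  move/le_trans; apply.
  exact: ab_le (dual_norm_ge0 _ _ _) (normr_ge0 _).
rewrite big_split /= EFinD.
apply: leeD.
  exact: le_trans low1 int1.
exact: le_trans low2 int2.
Qed.
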